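(* Let $A,B$ be integers with $A>4$ and $B>2A$, let $n\ge 1$, and let $(a_i,b_i)$, $i=0,1,\dots,n+1$, be integers with $a_0=b_0=A$, such that $s_i:=a_{i+1}-a_i\ge 0$ and $t_i:=b_{i+1}-b_i\ge 0$ for $i=0,\dots,n$, and such that $\min(a_1,b_1)\in[A,A+3]$, $a_n+b_n\le B$ and $a_{n+1}+b_{n+1}>B$. Then for any $q>0$ and any positive, smooth, convex, decreasing function $g:(0,\infty)\to(0,\infty)$, $$ \sum_{i=0}^n\big[s_i\,g(b_iq)+t_i\,g(a_iq)\big]\ge \frac 2q\int_{Aq}^{Bq}g\;-\;2B\,g(Bq/2). $$ *)

(* Defs.v *)
From Stdlib Require Export Reals ZArith.
From Coquelicot Require Export Coquelicot.
Open Scope R_scope.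

Definition pos_on_pos (g : R -> R) : Prop := forall x, 0 < x -> 0 < g x.

Definition smooth_on_pos (g : R -> R) : Prop :=
  forall (k : nat) (x : R), 0 < x -> ex_derive_n g k x.

Definition convex_on_pos (g : R -> R) : Prop :=
  forall x y t, 0 < x -> 0 < y -> 0 <= t <= 1 ->
    g (t * x + (1 - t) * y) <= t * g x + (1 - t) * g y.

Definition decreasing_on_pos (g : R -> R) : Prop :=
  forall x y, 0 < x -> x <= y -> g y <= g x.

(* Main.v *)
Require Import Defs.
From Stdlib Require Import Reals ZArith Lra Lia Psatz.
From Coquelicot Require Import Coquelicot.
Open Scope R_scope.

Lemma cont_g g : smooth_on_pos g -> forall z, 0 < z -> continuous g z.
Proof. intros H z Hz. exact (ex_derive_continuous g z (H 1%nat z Hz)). Qed.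

Lemma exR g : smooth_on_pos g -> forall a b, 0 < a -> 0 < b -> ex_RInt g a b.
Proof.
  intros H a b Ha Hb. apply (ex_RInt_continuous (V:=R_CompleteNormedModule)). intros z [H1 H2].
  apply cont_g; auto. assert (0 < Rmin a b) by (apply Rmin_glb_lt; auto). lra.
Qed.

Lemma chas g : smooth_on_pos g -> forall c u v, 0 < c -> 0 < u -> 0 < v ->
  RInt g c u - RInt g c v = RInt g v u.
Proof.
  intros H c u v Hc Hu Hv.
  rewrite <- (RInt_Chasles g c v u) by (apply exR; auto).
  unfold plus; simpl. ring.
Qed.

Lemma bnd g : smooth_on_pos g -> pos_on_pos g -> decreasing_on_pos g -> forall v u, 0 < v -> v <= u ->
  0 <= RInt g v u <= (u - v) * g v.
Proof.
  intros H Hp Hd v u Hv Hvu. split.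
  - apply RInt_ge_0; auto. apply exR; auto; lra.
    intros x Hx. apply Rlt_le, Hp; lra.
  - replace ((u - v) * g v) with (RInt (fun _ => g v) v u).
    apply RInt_le; auto. apply exR; auto; lra. apply ex_RInt_const.
    intros x Hx. apply Hd; lra.
    rewrite RInt_const. reflexivity.
Qed.

Lemma chord g : convex_on_pos g -> forall y x z, 0 < y -> y < x -> y <= z <= x ->
  (x - y) * g z <= (x - z) * g y + (z - y) * g x.
Proof.
  intros Hc y x z Hy Hyx Hz.
  set (t := (x - z) / (x - y)).
  assert (Ht : 0 <= t <= 1).
  { unfold t; split.
    - apply Rdiv_le_0_compat; lra.
    - apply (Rmult_le_reg_r (x - y)); [lra|]. unfold Rdiv. rewrite Rmult_assoc, Rinv_l; lra. }
  assert (E : t * y + (1 - t) * x = z).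
  { unfold t. field. lra. }
  pose proof (Hc y x t Hy (ltac:(lra)) Ht) as C. rewrite E in C.
  assert (E2 : (x - y) * (t * g y + (1 - t) * g x) = (x - z) * g y + (z - y) * g x).
  { unfold t. field. lra. }
  rewrite <- E2. apply Rmult_le_compat_l; lra.
Qed.

Lemma trap g : smooth_on_pos g -> convex_on_pos g -> forall y x, 0 < y -> y <= x ->
  2 * RInt g y x <= (x - y) * (g x + g y).
Proof.
  intros Hs Hc y x Hy Hyx.
  destruct (Req_dec y x) as [<-|Hne].
  { rewrite RInt_point. simpl. unfold zero; simpl. lra. }
  set (df := fun z => ((x - z) * g y + (z - y) * g x) / (x - y)).
  set (F := fun z => ((z - y) ^ 2 * g x - (x - z) ^ 2 * g y) / (2 * (x - y))).
  assert (HI : is_RInt df y x (minus (F x) (F y))).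
  { apply (is_RInt_derive (V:=R_CompleteNormedModule)).
    - intros z _. unfold F, df. auto_derive; auto. field. lra.
    - intros z _. unfold df. apply (ex_derive_continuous (V:=R_NormedModule)). auto_derive. lra. }
  apply (is_RInt_unique (V:=R_CompleteNormedModule)) in HI.
  assert (E : minus (F x) (F y) = (x - y) * (g x + g y) / 2).
  { unfold minus, plus, opp, F; simpl. field. lra. }
  rewrite E in HI.
  assert (RInt g y x <= RInt df y x).
  { apply RInt_le; auto. apply exR; auto; lra.
    apply (ex_RInt_continuous (V:=R_CompleteNormedModule)). intros z _.
    unfold df. apply (ex_derive_continuous (V:=R_NormedModule)). auto_derive. lra.
    intros z Hz. unfold df. apply (Rmult_le_reg_r (x - y)); [lra|].
    unfold Rdiv. rewrite Rmult_assoc, Rinv_l by lra. rewrite Rmult_1_r.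
    rewrite Rmult_comm. apply chord; auto; lra. }
  lra.
Qed.

Definition Phi (g : R -> R) c x y :=
  2 * RInt g c (Rmin x y) + (Rmax x y - Rmin x y) * g (Rmin x y).

Lemma Phi_sym g c x y : Phi g c x y = Phi g c y x.
Proof. unfold Phi. rewrite Rmin_comm, Rmax_comm. reflexivity. Qed.

Lemma axis g c : smooth_on_pos g -> convex_on_pos g -> decreasing_on_pos g ->
  0 < c -> forall x y t, 0 < x -> 0 < y -> 0 <= t ->
  Phi g c x (y + t) <= Phi g c x y + t * g x.
Proof.
  intros Hs Hc Hd Hc0 x y t Hx Hy Ht. unfold Phi.
  destruct (Rle_lt_dec x y) as [H1|H1].
  - rewrite (Rmin_left x y), (Rmax_right x y), (Rmin_left x (y+t)), (Rmax_right x (y+t)) by lra.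
    lra.
  - rewrite (Rmin_right x y), (Rmax_left x y) by lra.
    destruct (Rle_lt_dec x (y + t)) as [H2|H2].
    + rewrite (Rmin_left x (y+t)), (Rmax_right x (y+t)) by lra.
      pose proof (chas g Hs c x y Hc0 Hx Hy) as E.
      pose proof (trap g Hs Hc y x Hy (Rlt_le _ _ H1)). lra.
    + rewrite (Rmin_right x (y+t)), (Rmax_left x (y+t)) by lra.
      pose proof (chas g Hs c (y+t) y Hc0 ltac:(lra) Hy) as E.
      pose proof (trap g Hs Hc y (y+t) Hy ltac:(lra)).
      pose proof (chord g Hc y x (y+t) Hy H1 ltac:(lra)). lra.
Qed.

Lemma step g c : smooth_on_pos g -> convex_on_pos g -> decreasing_on_pos g ->
  0 < c -> forall x y s t, 0 < x -> 0 < y -> 0 <= s -> 0 <= t ->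
  Phi g c (x + s) (y + t) <= Phi g c x y + s * g y + t * g x.
Proof.
  intros Hs Hc Hd Hc0 x y s t Hx Hy Hs0 Ht.
  pose proof (axis g c Hs Hc Hd Hc0 x y t Hx Hy Ht).
  pose proof (axis g c Hs Hc Hd Hc0 (y+t) x s ltac:(lra) Hx Hs0).
  rewrite (Phi_sym g c (y+t) x), (Phi_sym g c (y+t) (x+s)) in H0.
  assert (s * g (y + t) <= s * g y) by (apply Rmult_le_compat_l; auto; apply Hd; lra).
  lra.
Qed.

Lemma final g c : smooth_on_pos g -> pos_on_pos g -> decreasing_on_pos g ->
  0 < c -> forall D x y, 2 * c < D -> c <= x -> c <= y -> D <= x + y ->
  2 * RInt g c D - D * g (D / 2) <= Phi g c x y.
Proof.
  intros Hs Hp Hd Hc0 D x y HD Hx Hy Hxy. unfold Phi.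
  set (m := Rmin x y). set (M := Rmax x y).
  assert (Hm : c <= m) by (unfold m; apply Rmin_glb; auto).
  assert (HmM : m + M = x + y) by (unfold m, M; destruct (Rle_dec x y);
    [rewrite Rmin_left, Rmax_right by lra | rewrite Rmin_right, Rmax_left by lra]; ring).
  assert (Hm2 : m <= M) by (unfold m, M; destruct (Rle_dec x y);
    [rewrite Rmin_left, Rmax_right by lra | rewrite Rmin_right, Rmax_left by lra]; lra).
  pose proof (chas g Hs c D (D/2) Hc0 ltac:(lra) ltac:(lra)) as E1.
  pose proof (bnd g Hs Hp Hd (D/2) D ltac:(lra) ltac:(lra)) as B1.
  assert (0 < g m) by (apply Hp; lra).
  destruct (Rle_lt_dec (D/2) m) as [H1|H1].
  - pose proof (chas g Hs c m (D/2) Hc0 ltac:(lra) ltac:(lra)) as E2.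
    pose proof (bnd g Hs Hp Hd (D/2) m ltac:(lra) H1) as B2.
    assert (0 <= (M - m) * g m) by (apply Rmult_le_pos; lra).
    lra.
  - pose proof (chas g Hs c (D/2) m Hc0 ltac:(lra) ltac:(lra)) as E2.
    pose proof (bnd g Hs Hp Hd m (D/2) ltac:(lra) ltac:(lra)) as B2.
    assert ((D - 2 * m) * g m <= (M - m) * g m) by (apply Rmult_le_compat_r; lra).
    lra.
Qed.

Theorem lemma8 (A B : Z) (n : nat) (a b : nat -> Z) (q : R) (g : R -> R)
  (hA : (A > 4)%Z) (hB : (B > 2 * A)%Z) (hn : (1 <= n)%nat)
  (ha0 : a 0%nat = A) (hb0 : b 0%nat = A)
  (hs : forall i : nat, (i <= n)%nat -> (a (S i) - a i >= 0)%Z)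
  (ht : forall i : nat, (i <= n)%nat -> (b (S i) - b i >= 0)%Z)
  (hmin : (A <= Z.min (a 1%nat) (b 1%nat) <= A + 3)%Z)
  (hnB : (a n + b n <= B)%Z)
  (hn1B : (a (S n) + b (S n) > B)%Z)
  (hq : 0 < q)
  (gpos : pos_on_pos g) (gsmooth : smooth_on_pos g)
  (gconv : convex_on_pos g) (gdec : decreasing_on_pos g) :
  sum_f_R0 (fun i => IZR (a (S i) - a i) * g (IZR (b i) * q)
                     + IZR (b (S i) - b i) * g (IZR (a i) * q)) n
  >= 2 / q * RInt g (IZR A * q) (IZR B * q) - 2 * IZR B * g (IZR B * q / 2).
Proof.
  set (f := fun i => IZR (a (S i) - a i) * g (IZR (b i) * q)
                     + IZR (b (S i) - b i) * g (IZR (a i) * q)).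
  set (c := IZR A * q).
  assert (HA : 4 < IZR A) by (apply IZR_lt; lia).
  assert (Hc : 0 < c) by (unfold c; nra).
  assert (mono : forall k, (k <= S n)%nat -> (A <= a k)%Z /\ (A <= b k)%Z).
  { induction k as [|k IH]; intros Hk.
    - rewrite ha0, hb0; lia.
    - destruct IH as [I1 I2]; [lia|].
      pose proof (hs k ltac:(lia)); pose proof (ht k ltac:(lia)); lia. }
  assert (pos : forall k, (k <= S n)%nat -> c <= IZR (a k) * q /\ c <= IZR (b k) * q).
  { intros k Hk. destruct (mono k Hk) as [I1 I2].
    apply IZR_le in I1, I2. unfold c; split; nra. }
  assert (ind : forall k, (k <= n)%nat ->
    Phi g c (IZR (a (S k)) * q) (IZR (b (S k)) * q) <= q * sum_f_R0 f k).
  { assert (st : forall k, (k <= n)%nat ->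
      Phi g c (IZR (a (S k)) * q) (IZR (b (S k)) * q) <=
      Phi g c (IZR (a k) * q) (IZR (b k) * q) + q * f k).
    { intros k Hk.
      destruct (pos k ltac:(lia)) as [P1 P2].
      pose proof (hs k Hk) as S1. pose proof (ht k Hk) as S2.
      assert (T1 : 0 <= IZR (a (S k) - a k)) by (apply IZR_le; lia).
      assert (T2 : 0 <= IZR (b (S k) - b k)) by (apply IZR_le; lia).
      pose proof (step g c gsmooth gconv gdec Hc (IZR (a k) * q) (IZR (b k) * q)
        (IZR (a (S k) - a k) * q) (IZR (b (S k) - b k) * q) ltac:(lra) ltac:(lra)
        ltac:(nra) ltac:(nra)) as HS.
      rewrite !minus_IZR in HS.
      replace (IZR (a k) * q + (IZR (a (S k)) - IZR (a k)) * q) with (IZR (a (S k)) * q) in HS by ring.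
      replace (IZR (b k) * q + (IZR (b (S k)) - IZR (b k)) * q) with (IZR (b (S k)) * q) in HS by ring.
      unfold f. rewrite !minus_IZR. lra. }
    induction k as [|k IH]; intros Hk.
    - pose proof (st 0%nat Hk) as H0. simpl sum_f_R0.
      rewrite ha0, hb0 in H0. fold c in H0.
      unfold Phi at 2 in H0. rewrite Rmin_left, Rmax_left, RInt_point in H0 by lra.
      unfold zero in H0; simpl in H0. lra.
    - pose proof (st (S k) Hk). pose proof (IH ltac:(lia)). simpl sum_f_R0. lra. }
  pose proof (ind n (le_n n)) as HI.
  destruct (pos (S n) (le_n _)) as [P1 P2].
  assert (HB' : 2 * IZR A < IZR B) by (rewrite <- mult_IZR; apply IZR_lt; lia).
  assert (HB2 : IZR B <= IZR (a (S n)) + IZR (b (S n))) by (rewrite <- plus_IZR; apply IZR_le; lia).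
  pose proof (final g c gsmooth gpos gdec Hc (IZR B * q) (IZR (a (S n)) * q) (IZR (b (S n)) * q)
    ltac:(unfold c; nra) P1 P2 ltac:(nra)) as HF.
  fold f. fold c.
  set (I := RInt g c (IZR B * q)) in *.
  set (gv := g (IZR B * q / 2)) in *.
  assert (0 < gv) by (apply gpos; nra).
  apply Rle_ge. apply (Rmult_le_reg_l q); auto.
  replace (q * (2 / q * I - 2 * IZR B * gv)) with (2 * I - 2 * (IZR B * q) * gv) by (field; lra).
  assert (0 <= IZR B * q * gv) by (apply Rmult_le_pos; nra).
  lra.
Qed.
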